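(* Let $R$ be an integral domain and $Q$ a quandle. Then: (1) The extended quandle ring $R^{\circ}[Q]$ contains zero-divisors. (2) If $Q$ contains a trivial subquandle with more than one element, then $R[Q]$ contains zero-divisors. (3) If $Q$ is inert, then $R[Q]$ contains zero-divisors. In particular, if $Q$ contains a finite subquandle with more than one element, then $R[Q]$ contains zero-divisors. (4) If $Q$ is not semi-latin, then $R[Q]$ contains zero-divisors.
   Context: A quandle is a non-empty set $Q$ with a binary operation $(x,y)\mapsto xy$ such that $xx=x$ for all $x$; for all $x,y$ there is a unique $z$ with $x=zy$; and $(xy)z=(xz)(yz)$ for all $x,y,z$. A subquandle is a subset closed under the operation which is a quandle with it. A quandle is trivial if $xy=x$ for all $x,y$. The quandle ring $R[Q]$ is the free $R$-module with basis $Q$, with multiplication $\big(\sum_i\alpha_i x_i\big)\big(\sum_j\beta_j x_j\big)=\sum_{i,j}\alpha_i\beta_j (x_ix_j)$ (in general non-associative). The extended quandle ring is $R^{\circ}[Q]=R[Q]\oplus Re$, where $e$ is a symbol not in $Q$ acting as a two-sided identity: $eu=u=ue$ for $u\in R[Q]$ and $ee=e$. A zero-divisor in a ring is a non-zero element $u$ for which there exists a non-zero $v$ with $uv=0$ or $vu=0$. A quandle $Q$ with more than one element is inert if there exist a finite subset $A=\{a_1,\dots,a_n\}\subseteq Q$ and two distinct elements $x,y\in Q$ such that $Ax=Ay$, where $Az=\{a_1z,\dots,a_nz\}$. A quandle is semi-latin if for each $x\in Q$ the map $L_x:Q\to Q$, $L_x(y)=xy$, is injective. *)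

(* Defs.v *)
From HB Require Import structures.
From mathcomp Require Import all_boot all_order all_algebra.
From mathcomp Require Import finmap.
Set Implicit Arguments. Unset Strict Implicit. Unset Printing Implicit Defensive.
Import GRing.Theory.
Local Open Scope ring_scope.
Local Open Scope fset_scope.

(* A quandle: a (non-empty) set Q with a binary operation op (op x y = "xy"). *)
Definition is_quandle (Q : Type) (op : Q -> Q -> Q) : Prop :=
  inhabited Q /\
  (forall x, op x x = x) /\
  (forall x y, exists z, x = op z y /\ forall z', x = op z' y -> z' = z) /\
  (forall x y z, op (op x y) z = op (op x z) (op y z)).

(* S is a subquandle: non-empty, closed under op, and a quandle with the
   restricted operation (idempotence, distributivity and uniqueness of the
   right division are inherited; existence must happen inside S). *)
Definition is_subquandle (Q : eqType) (op : Q -> Q -> Q) (S : pred Q) : Prop :=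
  (exists x, x \in S) /\
  (forall x y, x \in S -> y \in S -> op x y \in S) /\
  (forall x y, x \in S -> y \in S -> exists2 z, z \in S & x = op z y).

Definition trivial_on (Q : eqType) (op : Q -> Q -> Q) (S : pred Q) : Prop :=
  forall x y, x \in S -> y \in S -> op x y = x.

Definition finite_pred (Q : eqType) (S : pred Q) : Prop :=
  exists s : seq Q, forall x, x \in S -> x \in s.

Definition has_two_elements (Q : eqType) (S : pred Q) : Prop :=
  exists x y, [/\ x \in S, y \in S & x != y].

Definition inert (Q : choiceType) (op : Q -> Q -> Q) : Prop :=
  (exists x y : Q, x != y) /\
  exists (A : {fset Q}) (x y : Q),
    [/\ A != fset0, x != y & [fset op a x | a in A] = [fset op a y | a in A]].

Definition semi_latin (Q : Type) (op : Q -> Q -> Q) : Prop :=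
  forall x, injective (op x).

Notation qring Q R := {fsfun Q -> R with 0}.

Definition qr_mul (R : idomainType) (Q : choiceType) (op : Q -> Q -> Q)
    (u v : qring Q R) (z : Q) : R :=
  \sum_(x <- finsupp u) \sum_(y <- finsupp v | op x y == z) u x * v y.

Definition qr_nonzero (R : idomainType) (Q : choiceType) (u : qring Q R) : Prop :=
  exists x, u x != 0.

Definition qr_zero_divisor (R : idomainType) (Q : choiceType) (op : Q -> Q -> Q)
    (u : qring Q R) : Prop :=
  qr_nonzero u /\
  exists v : qring Q R, qr_nonzero v /\
    ((forall z, qr_mul op u v z = 0) \/ (forall z, qr_mul op v u z = 0)).

Definition qr_has_zero_divisors (R : idomainType) (Q : choiceType)
    (op : Q -> Q -> Q) : Prop :=
  exists u : qring Q R, qr_zero_divisor op u.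

(* Extended quandle ring R°[Q] = R[Q] (+) R e: pairs (u, a) meaning u + a e. *)
Definition eqring (Q : choiceType) (R : idomainType) := (qring Q R * R)%type.

(* (u + a e)(v + b e) = uv + a v + b u + ab e; result given by coefficients. *)
Definition eqr_mul (R : idomainType) (Q : choiceType) (op : Q -> Q -> Q)
    (p q : eqring Q R) : (Q -> R) * R :=
  (fun z => (qr_mul op p.1 q.1 z + p.2 * q.1 z + q.2 * p.1 z)%R, (p.2 * q.2)%R).

Definition eqr_nonzero (R : idomainType) (Q : choiceType) (p : eqring Q R) : Prop :=
  qr_nonzero p.1 \/ p.2 != 0.

Definition eqr_is_zero (R : idomainType) (Q : Type) (w : (Q -> R) * R) : Prop :=
  (forall z, w.1 z = 0) /\ w.2 = 0.

Definition eqr_zero_divisor (R : idomainType) (Q : choiceType) (op : Q -> Q -> Q)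
    (p : eqring Q R) : Prop :=
  eqr_nonzero p /\
  exists q : eqring Q R, eqr_nonzero q /\
    (eqr_is_zero (eqr_mul op p q) \/ eqr_is_zero (eqr_mul op q p)).

Definition eqr_has_zero_divisors (R : idomainType) (Q : choiceType)
    (op : Q -> Q -> Q) : Prop :=
  exists p : eqring Q R, eqr_zero_divisor op p.

(* Main.v *)
Require Import Defs.
From HB Require Import structures.
From mathcomp Require Import all_boot all_order all_algebra.
From mathcomp Require Import finmap.
From Stdlib Require Import Classical.
Set Implicit Arguments. Unset Strict Implicit. Unset Printing Implicit Defensive.
Import GRing.Theory.
Local Open Scope ring_scope.
Local Open Scope fset_scope.

Lemma sum_sup (I : eqType) (R : nmodType) (s t : seq I) (F : I -> R) :
  uniq s -> uniq t -> {subset s <= t} ->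
  (forall i, i \in t -> i \notin s -> F i = 0) ->
  \sum_(i <- s) F i = \sum_(i <- t) F i.
Proof.
move=> us ut sst F0.
rewrite [RHS](bigID (fun i => i \in s)) /=.
rewrite [X in (_ + X)%R]big1_seq ?addr0; last first.
  by move=> i /andP[ns it]; apply: F0.
rewrite -[RHS]big_filter; apply: perm_big; apply: uniq_perm => //.
  exact: filter_uniq.
by move=> i; rewrite mem_filter; case: (boolP (i \in s)) => //= /sst ->.
Qed.

Lemma qr_mul_sub (R : idomainType) (Q : choiceType) (op : Q -> Q -> Q)
  (u v : qring Q R) (S T : seq Q) z :
  uniq S -> uniq T -> {subset finsupp u <= S} -> {subset finsupp v <= T} ->
  qr_mul op u v z = \sum_(a <- S) \sum_(b <- T | op a b == z) u a * v b.
Proof.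
move=> uS uT sS sT; rewrite /qr_mul.
rewrite (@sum_sup Q R (finsupp u) S) //; last first.
  move=> a _ ha; rewrite big1 // => b _.
  by move: ha; rewrite mem_finsupp negbK => /eqP ->; rewrite mul0r.
apply: eq_bigr => a _; rewrite big_mkcond [RHS]big_mkcond /=.
rewrite (@sum_sup Q R (finsupp v) T) //.
move=> b _; rewrite mem_finsupp negbK => /eqP ->; rewrite mulr0.
by case: ifP.
Qed.

Lemma ind_sum (R : idomainType) (Q : eqType) (f : Q -> Q) (s : seq Q) z :
  uniq s -> injective f ->
  \sum_(a <- s) ((f a == z)%:R : R) = (z \in map f s)%:R.
Proof.
move=> + inj; elim: s => [|a s IH] /=; first by rewrite big_nil.
move=> /andP[nas us]; rewrite big_cons IH // in_cons.
case: (eqVneq (f a) z) => [<-|ne].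
  rewrite /=.
  have -> : f a \in map f s = false.
    by apply/negbTE/negP => /mapP[b bs /inj eab]; move: nas; rewrite eab bs.
  by rewrite addr0.
by rewrite add0r.
Qed.

Lemma memimE (Q : choiceType) (f : Q -> Q) (A : {fset Q}) z :
  (z \in [fset f a | a in A]) = (z \in map f A).
Proof.
apply/imfsetP/mapP => [[a aA ->]|[a aA ->]]; by exists a.
Qed.

Lemma key (R : idomainType) (Q : choiceType) (op : Q -> Q -> Q)
  (rinj : forall x, injective (fun a => op a x)) (A : {fset Q}) x y :
  A != fset0 -> x != y ->
  [fset op a x | a in A] = [fset op a y | a in A] -> qr_has_zero_divisors R op.
Proof.
move=> /fset0Pn [w wA] nxy eqA.
pose u : qring Q R := [fsfun a in A => (1:R)].
pose v : qring Q R := [fsfun a in [fset x; y] => (if a == x then 1 else -1 : R)].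
have uE a : u a = if a \in A then 1 else 0 by rewrite /u fsfunE.
have vE a : v a = if a \in [fset x; y] then (if a == x then 1 else -1) else 0.
  by rewrite /v fsfunE.
exists u; split; first by exists w; rewrite uE wA oner_neq0.
exists v; split; first by exists x; rewrite vE !inE eqxx /= oner_neq0.
left => z.
have h1 : uniq A by exact: fset_uniq.
have h2 : uniq [:: x; y] by rewrite /= inE nxy.
have h3 : {subset finsupp u <= A}.
  by move=> a; rewrite mem_finsupp uE; case: ifP => // _; rewrite eqxx.
have h4 : {subset finsupp v <= [:: x; y]}.
  move=> a; rewrite mem_finsupp vE !inE; case: ifP => // _; by rewrite eqxx.
rewrite (@qr_mul_sub _ _ _ _ _ A [:: x; y] _ h1 h2 h3 h4).
transitivity (\sum_(a <- A) ((op a x == z)%:R - (op a y == z)%:R : R)).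
  apply: eq_big_seq => a aA.
  rewrite big_cons big_cons big_nil !uE !vE aA !inE eqxx /= [y == x]eq_sym (negbTE nxy) eqxx orbT.
  by case: (op a x == z); case: (op a y == z); rewrite /= ?mul1r ?addr0 ?add0r ?subr0 ?sub0r ?subrr ?oppr0.
rewrite sumrB !(@ind_sum R Q) ?fset_uniq //.
by rewrite -!memimE eqA subrr.
Qed.



Theorem proposition3p1 (R : idomainType) (Q : choiceType) (op : Q -> Q -> Q)
    (hQ : is_quandle op) :
  [/\ eqr_has_zero_divisors R op,
      (exists S : pred Q,
          [/\ is_subquandle op S, trivial_on op S & has_two_elements S]) ->
        qr_has_zero_divisors R op,
      (inert op -> qr_has_zero_divisors R op) /\
      ((exists S : pred Q,
          [/\ is_subquandle op S, finite_pred S & has_two_elements S]) ->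
        qr_has_zero_divisors R op)
    & ~ semi_latin op -> qr_has_zero_divisors R op].
Proof.
case: hQ => [[w0] [idem [hdiv _]]].
have rinj : forall x, injective (fun a => op a x).
  move=> x a b eab; case: (hdiv (op a x) x) => z [_ hz].
  by rewrite (hz a erefl) (hz b eab).
split.
- pose u : qring Q R := [fsfun a in [fset w0] => (1:R)].
  have uE a : u a = if a == w0 then 1 else 0 by rewrite /u fsfunE inE.
  exists (u, -1); split; first by left; exists w0; rewrite uE eqxx oner_neq0.
  exists (u, 0); split; first by left; exists w0; rewrite uE eqxx oner_neq0.
  left; split => [z|] /=; last by rewrite mulr0.
  have h1 : uniq [:: w0] by [].
  have h3 : {subset finsupp u <= [:: w0]}.
    by move=> a; rewrite mem_finsupp uE inE; case: ifP => // _; rewrite eqxx.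
  rewrite (@qr_mul_sub _ _ _ _ _ [:: w0] [:: w0] _ h1 h1 h3 h3).
  rewrite !big_cons !big_nil /= !uE eqxx idem mul0r addr0 mul1r.
  by case: (eqVneq w0 z) => [e|ne]; rewrite ?addr0 ?mulN1r ?subrr ?mulr0 ?oppr0.
- case=> S [_ triv [x [y [xS yS nxy]]]].
  apply: (@key R Q op rinj [fset x] x y) => //.
    by apply/fset0Pn; exists x; rewrite inE.
  by rewrite !imfset_fset1 (triv x x) // (triv x y).
- split.
    by case=> _ [A [x [y [A0 nxy eqA]]]]; apply: (@key R Q op rinj A x y).
  case=> S [[_ [cl ex]] [s hs] [x [y [xS yS nxy]]]].
  pose A := [fset a | a in s & a \in S].
  have AE a : (a \in A) = (a \in S).
    rewrite !inE /=; apply/andP/idP => [[] //|aS]; split => //; exact: hs.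
  have img b : b \in S -> [fset op a b | a in A] = A.
    move=> bS; apply/fsetP => c; rewrite AE; apply/imfsetP/idP.
      by case=> a /=; rewrite AE => aS ->; apply: cl.
    move=> cS; case: (ex c b cS bS) => d dS ->; exists d => //=; by rewrite AE.
  apply: (@key R Q op rinj A x y) => //.
    by apply/fset0Pn; exists x; rewrite AE.
  by rewrite img // img.
- move=> nsl.
  have [w hw] : exists w, ~ injective (op w).
    by apply: not_all_ex_not.
  have [a [b [eab nab]]] : exists a b, op w a = op w b /\ a != b.
    apply: NNPP => H; apply: hw => a b eab; apply/eqP; apply: NNPP => nab.
    by apply: H; exists a, b; split => //; apply/negP.
  apply: (@key R Q op rinj [fset w] a b) => //.
    by apply/fset0Pn; exists w; rewrite inE.
  by rewrite !imfset_fset1 eab.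
Qed.
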